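(* Let $(M,\rho)$ be a metric space, let $f,g:M\to\mathbb{R}\cup\{+\infty\}$, and let $\lambda\in\mathbb{R}$ be such that $L_\lambda(f-g)\cap\operatorname{dom} f\cap\operatorname{dom} g\neq\varnothing$. Let $M_1:=L_\lambda(f-g)$ and $f_1:=f|_{M_1}$, regarded as a function on the metric space $(M_1,\rho)$. If $x\in M_1\cap\operatorname{dom} g$ satisfies $|\nabla f|(x)>|\nabla g|(x)$, then $|\nabla f_1|(x)=|\nabla f|(x)$.
   Context: Functions take values in $\mathbb{R}\cup\{+\infty\}$; $\operatorname{dom} f:=\{x:f(x)<+\infty\}$; the expression $\infty-\infty$ is undefined. For $\lambda\in\mathbb{R}$, $L_\lambda(f-g):=\{x\in\operatorname{dom} f:\ f(x)-g(x)\le\lambda\}$ (where $f(x)-g(x)=-\infty$ if $g(x)=+\infty$). $[t]^+:=\max\{0,t\}$, with $[f(x)-f(y)]^+:=0$ if $f(y)=+\infty$. For $x\in\operatorname{dom} f$, the local slope is $|\nabla f|(x):=\limsup_{y\to x,\,y\neq x}\frac{[f(x)-f(y)]^+}{\rho(x,y)}\in[0,+\infty]$ (equal to $0$ at isolated points); for a restriction to a subset, the slope is computed in the subspace metric, i.e. with $y$ ranging over the subset. *)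

(* Defs.v *)
From Stdlib Require Import Reals.
From Coquelicot Require Import Coquelicot.
Open Scope R_scope.

Record MetricSpace := {
  mcarrier :> Type;
  mdist : mcarrier -> mcarrier -> R;
  mdist_ge0 : forall x y, 0 <= mdist x y;
  mdist_eq0 : forall x y, mdist x y = 0 <-> x = y;
  mdist_sym : forall x y, mdist x y = mdist y x;
  mdist_tri : forall x y z, mdist x z <= mdist x y + mdist y z }.

(* Values in R ∪ {+oo}: [Some r] is the real r, [None] is +oo. *)
Definition ERfun (M : MetricSpace) := M -> option R.

Definition dom {M : MetricSpace} (f : ERfun M) (x : M) : Prop := f x <> None.

(* L_lambda(f - g) = { x in dom f : f x - g x <= lambda },
   with f x - g x = -oo when g x = +oo. *)
Definition sublevel {M : MetricSpace} (f g : ERfun M) (lam : R) (x : M) : Prop :=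
  match f x, g x with
  | Some a, Some b => a - b <= lam
  | Some _, None => True
  | None, _ => False
  end.

(* [a - f y]^+ with the convention [a - (+oo)]^+ = 0. *)
Definition pos_diff (a : R) (b : option R) : R :=
  match b with Some r => Rmax 0 (a - r) | None => 0 end.

(* Local slope of f restricted to the subset S (subspace metric) at x in dom f:
   limsup_{y -> x, y in S, y <> x} [f x - f y]^+ / rho(x,y)
   = inf_{delta > 0} sup { [f x - f y]^+ / rho(x,y) : y in S, y <> x, rho(x,y) < delta },
   with value 0 at isolated points.  Since all quotients are >= 0, adding 0 to each
   supremum does not change the limsup at non-isolated points and yields exactly 0
   at isolated points.  The value at points outside dom f is irrelevant (set to +oo). *)
Definition slope_on {M : MetricSpace} (S : M -> Prop) (f : ERfun M) (x : M) : Rbar :=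
  match f x with
  | Some a =>
      Rbar_glb (fun s => exists delta : R, 0 < delta /\
        s = Rbar_lub (fun t => t = Finite 0 \/
              exists y : M, S y /\ y <> x /\ mdist M x y < delta /\
                t = Finite (pos_diff a (f y) / mdist M x y)))
  | None => p_infty
  end.

Definition slope {M : MetricSpace} (f : ERfun M) (x : M) : Rbar :=
  slope_on (fun _ => True) f x.

(* Main.v *)
Require Import Defs.
From Stdlib Require Import Reals Lra Classical.
From Coquelicot Require Import Coquelicot.
Open Scope R_scope.

Lemma Rbar_glb_correct (E : Rbar -> Prop) : Rbar_is_glb E (Rbar_glb E).
Proof. unfold Rbar_glb. destruct (Rbar_ex_glb E); auto. Qed.
Lemma Rbar_lub_correct (E : Rbar -> Prop) : Rbar_is_lub E (Rbar_lub E).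
Proof. unfold Rbar_lub. destruct (Rbar_ex_lub E); auto. Qed.

Lemma glb_lt (E : Rbar -> Prop) (c : Rbar) :
  Rbar_lt (Rbar_glb E) c -> exists s, E s /\ Rbar_lt s c.
Proof.
  intros H. apply NNPP; intros N.
  destruct (Rbar_glb_correct E) as [_ Hg].
  assert (Rbar_le c (Rbar_glb E)).
  { apply Hg. intros s Hs. apply Rbar_not_lt_le. intros Hl. apply N. eauto. }
  apply (Rbar_lt_not_le _ _ H H0).
Qed.

Lemma div_gt (p d c : R) : 0 < d -> c < p / d -> c * d < p.
Proof. intros Hd H. assert (p = (p/d)*d) by (field; lra). nra. Qed.

Lemma div_lt (p d c : R) : 0 < d -> p / d < c -> p < c * d.
Proof. intros Hd H. assert (p = (p/d)*d) by (field; lra). nra. Qed.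

Theorem lemma2p4 (M : MetricSpace) (f g : ERfun M) (lam : R)
  (Hne : exists z : M, sublevel f g lam z /\ dom f z /\ dom g z)
  (x : M) (HxM1 : sublevel f g lam x) (Hxg : dom g x)
  (Hgt : Rbar_lt (slope g x) (slope f x)) :
  slope_on (sublevel f g lam) f x = slope f x.
Proof.
  clear Hne.
  unfold slope, slope_on, dom in *.
  unfold sublevel in HxM1 at 1.
  destruct (f x) as [a|] eqn:Hfx; [|contradiction].
  destruct (g x) as [b|] eqn:Hgx; [|exfalso; apply Hxg; reflexivity].
  assert (Hab : a - b <= lam) by exact HxM1.
  set (Aall := fun (S : M -> Prop) (delta : R) => Rbar_lub (fun t => t = Finite 0 \/
              exists y : M, S y /\ y <> x /\ mdist M x y < delta /\
                t = Finite (pos_diff a (f y) / mdist M x y))) in *.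
  set (Ag := fun (delta : R) => Rbar_lub (fun t => t = Finite 0 \/
              exists y : M, True /\ y <> x /\ mdist M x y < delta /\
                t = Finite (pos_diff b (g y) / mdist M x y))) in *.
  change (Rbar_glb (fun s => exists delta : R, 0 < delta /\ s = Aall (sublevel f g lam) delta)
    = Rbar_glb (fun s => exists delta : R, 0 < delta /\ s = Aall (fun _ => True) delta)).
  change (Rbar_lt (Rbar_glb (fun s => exists delta : R, 0 < delta /\ s = Ag delta))
    (Rbar_glb (fun s => exists delta : R, 0 < delta /\ s = Aall (fun _ => True) delta))) in Hgt.
  set (SG := Rbar_glb (fun s => exists delta : R, 0 < delta /\ s = Ag delta)) in *.
  set (SF := Rbar_glb (fun s => exists delta : R, 0 < delta /\ s = Aall (fun _ => True) delta)) in *.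
  assert (HSG0 : Rbar_le (Finite 0) SG).
  { destruct (Rbar_glb_correct (fun s => exists delta : R, 0 < delta /\ s = Ag delta)) as [_ Hg].
    apply Hg. intros s [d [Hd ->]]. unfold Ag.
    destruct (Rbar_lub_correct (fun t => t = Finite 0 \/
              exists y : M, True /\ y <> x /\ mdist M x y < d /\
                t = Finite (pos_diff b (g y) / mdist M x y))) as [Hu _].
    apply Hu. left; reflexivity. }
  assert (Hc : exists c : R, 0 <= c /\ Rbar_lt SG (Finite c) /\ Rbar_lt (Finite c) SF).
  { destruct SG as [sg| |]; simpl in HSG0; try contradiction;
    destruct SF as [sf| |]; simpl in Hgt; try contradiction.
    + exists ((sg+sf)/2). simpl. repeat split; lra.
    + exists (sg+1). simpl. repeat split; lra. }
  destruct Hc as [c [Hc0 [HcG HcF]]].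
  destruct (glb_lt _ _ HcG) as [s [[d0 [Hd0 ->]] Hs]].
  assert (Hgq : forall y, y <> x -> mdist M x y < d0 -> pos_diff b (g y) / mdist M x y < c).
  { intros y Hy Hd.
    destruct (Rbar_lub_correct (fun t => t = Finite 0 \/
              exists y : M, True /\ y <> x /\ mdist M x y < d0 /\
                t = Finite (pos_diff b (g y) / mdist M x y))) as [Hu _].
    assert (Hle := Hu (Finite (pos_diff b (g y) / mdist M x y)) (or_intror (ex_intro _ y (conj I (conj Hy (conj Hd eq_refl)))))).
    fold (Ag d0) in Hle.
    exact (Rbar_le_lt_trans _ _ _ Hle Hs). }
  assert (Hkey : forall y, y <> x -> mdist M x y < d0 -> c < pos_diff a (f y) / mdist M x y ->
             sublevel f g lam y).
  { intros y Hy Hd Hq.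
    assert (Hdp : 0 < mdist M x y).
    { destruct (mdist_ge0 M x y) as [H|H]; auto. exfalso. apply Hy.
      symmetry. apply (mdist_eq0 M). auto. }
    specialize (Hgq y Hy Hd).
    unfold sublevel. destruct (f y) as [v|] eqn:Hfy.
    - destruct (g y) as [w|] eqn:Hgy; [|exact I].
      simpl in Hq, Hgq. apply div_gt in Hq; auto. apply div_lt in Hgq; auto.
      assert (0 <= c * mdist M x y) by (apply Rmult_le_pos; lra).
      assert (a - v > c * mdist M x y) by (revert Hq; unfold Rmax; destruct Rle_dec; intros; lra).
      assert (b - w < c * mdist M x y) by (revert Hgq; unfold Rmax; destruct Rle_dec; intros; lra).
      lra.
    - simpl in Hq. unfold Rdiv in Hq. rewrite Rmult_0_l in Hq. lra. }
  apply Rbar_le_antisym.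
  -
    destruct (Rbar_glb_correct (fun s => exists delta : R, 0 < delta /\ s = Aall (fun _ => True) delta)) as [_ Hg].
    apply Hg. intros s [d [Hd ->]].
    destruct (Rbar_glb_correct (fun s => exists delta : R, 0 < delta /\ s = Aall (sublevel f g lam) delta)) as [Hl _].
    apply Rbar_le_trans with (Aall (sublevel f g lam) d).
    + apply Hl. eauto.
    + unfold Aall. apply Rbar_lub_correct. intros t Ht.
      apply Rbar_lub_correct. destruct Ht as [Ht|[y [_ Hy]]]; [left; auto| right; exists y; auto].
  - destruct (Rbar_glb_correct (fun s => exists delta : R, 0 < delta /\ s = Aall (sublevel f g lam) delta)) as [_ Hg].
    apply Hg. intros s [d [Hd ->]].
    set (d' := Rmin d d0).
    assert (Hd' : 0 < d') by (unfold d'; apply Rmin_pos; auto).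
    destruct (Rbar_glb_correct (fun s => exists delta : R, 0 < delta /\ s = Aall (fun _ => True) delta)) as [Hl _].
    assert (H1 : Rbar_le SF (Aall (fun _ => True) d')) by (apply Hl; eauto).
    apply Rbar_le_trans with (Aall (fun _ => True) d'); auto.
    destruct (Rbar_lt_le_dec (Aall (sublevel f g lam) d) (Finite c)) as [Hlt|Hge].
    + exfalso.
      assert (Rbar_le (Aall (fun _ => True) d') (Finite c)).
      { unfold Aall at 1. apply Rbar_lub_correct. intros t [->|[y [_ [Hy [Hdy ->]]]]].
        - simpl; lra.
        - simpl. apply Rnot_lt_le. intros Hq.
          assert (Hdd : mdist M x y < d0) by (apply Rlt_le_trans with d'; auto; apply Rmin_r).
          assert (Hdd2 : mdist M x y < d) by (apply Rlt_le_trans with d'; auto; apply Rmin_l).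
          assert (Hin := Hkey y Hy Hdd Hq).
          assert (Rbar_le (Finite (pos_diff a (f y) / mdist M x y)) (Aall (sublevel f g lam) d)).
          { unfold Aall. apply Rbar_lub_correct. right. exists y. auto. }
          apply (Rbar_lt_not_le _ _ (Rbar_le_lt_trans _ _ _ H Hlt)). simpl. lra. }
      apply (Rbar_lt_not_le _ _ HcF). eapply Rbar_le_trans; eauto.
    + unfold Aall at 1. apply Rbar_lub_correct. intros t [->|[y [_ [Hy [Hdy ->]]]]].
      * eapply Rbar_le_trans; [|exact Hge]. simpl; lra.
      * destruct (Rle_lt_dec (pos_diff a (f y) / mdist M x y) c) as [Hq|Hq].
        -- eapply Rbar_le_trans; [|exact Hge]. simpl; lra.
        -- assert (Hdd : mdist M x y < d0) by (apply Rlt_le_trans with d'; auto; apply Rmin_r).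
           assert (Hdd2 : mdist M x y < d) by (apply Rlt_le_trans with d'; auto; apply Rmin_l).
           unfold Aall. apply Rbar_lub_correct. right. exists y. auto 6.
Qed.
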